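(* Assume $\kappa=\kappa^{<\kappa}$ and let $x\in S_\kappa$. Every clopen, non-compact subset of $S_\kappa\setminus\{x\}$ has $S_\kappa$-type exactly $\kappa$, i.e. it is a union of $\kappa$ many clopen subsets of $S_\kappa$ but not a union of fewer than $\kappa$ many clopen subsets of $S_\kappa$.
   Context: A space is zero-dimensional if it has a base of clopen sets. For a zero-dimensional space $X$ and an open $U\subseteq X$, the ($X$-)type $\tau(U)$ is the least cardinal $\tau$ such that $U$ is a union of $\tau$ many clopen subsets of $X$. A zero-dimensional space is an $F_\kappa$-space if every open subset of type less than $\kappa$ is $C^*$-embedded (every bounded continuous real-valued function on it extends continuously to the whole space). A space is a $G_\kappa$-space if every non-empty intersection of fewer than $\kappa$ open sets has non-empty interior. A $\kappa$-Parovičenko space is a compact Hausdorff zero-dimensional $F_\kappa$- and $G_\kappa$-space without isolated points (no weight restriction is imposed). If $\kappa=\kappa^{<\kappa}$ there is, up to homeomorphism, a unique $\kappa$-Parovičenko space of weight $\kappa$; it is denoted $S_\kappa$. *)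

(* Defs.v *)
(* Sets are predicates X -> Prop,
   cardinals are represented by types, compared via injections. *)
From Stdlib Require Import Reals List.
Open Scope R_scope.

Definition le_card (A B : Type) : Prop :=
  exists f : A -> B, forall a1 a2, f a1 = f a2 -> a1 = a2.
Definition lt_card (A B : Type) : Prop := le_card A B /\ ~ le_card B A.

(* kappa (the cardinality of K) is infinite and kappa^{<kappa} = kappa,
   i.e. kappa^lambda <= kappa for every lambda < kappa *)
Definition infinite_card (K : Type) : Prop := le_card nat K.
Definition kappa_lt_kappa_eq (K : Type) : Prop :=
  forall L : Type, lt_card L K -> le_card (L -> K) K.

Definition is_topology {X : Type} (op : (X -> Prop) -> Prop) : Prop :=
  (forall A B : X -> Prop, (forall x, A x <-> B x) -> op A -> op B) /\
  op (fun _ => True) /\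
  (forall A B, op A -> op B -> op (fun x => A x /\ B x)) /\
  (forall (I : Type) (F : I -> X -> Prop),
      (forall i, op (F i)) -> op (fun x => exists i, F i x)).

Definition clopen {X : Type} (op : (X -> Prop) -> Prop) (A : X -> Prop) : Prop :=
  op A /\ op (fun x => ~ A x).

Definition zero_dimensional {X : Type} (op : (X -> Prop) -> Prop) : Prop :=
  forall (U : X -> Prop) (x : X), op U -> U x ->
    exists C, clopen op C /\ C x /\ forall y, C y -> U y.

Definition union_of_clopens {X : Type} (op : (X -> Prop) -> Prop)
    (I : Type) (U : X -> Prop) : Prop :=
  exists F : I -> X -> Prop,
    (forall i, clopen op (F i)) /\ forall y, U y <-> exists i, F i y.

Definition type_lt {X : Type} (op : (X -> Prop) -> Prop) (U : X -> Prop) (K : Type) : Prop :=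
  exists I : Type, lt_card I K /\ union_of_clopens op I U.

Definition type_eq {X : Type} (op : (X -> Prop) -> Prop) (U : X -> Prop) (K : Type) : Prop :=
  union_of_clopens op K U /\
  forall I : Type, lt_card I K -> ~ union_of_clopens op I U.

Definition continuous_on {X : Type} (op : (X -> Prop) -> Prop) (A : X -> Prop) (f : X -> R) : Prop :=
  forall a, A a -> forall eps, eps > 0 ->
    exists V, op V /\ V a /\ forall y, V y -> A y -> Rabs (f y - f a) < eps.

Definition C_star_embedded {X : Type} (op : (X -> Prop) -> Prop) (U : X -> Prop) : Prop :=
  forall f : X -> R,
    (exists M, forall y, U y -> Rabs (f y) <= M) ->
    continuous_on op U f ->
    exists g : X -> R, continuous_on op (fun _ => True) g /\ forall y, U y -> g y = f y.

Definition F_kappa_space {X : Type} (op : (X -> Prop) -> Prop) (K : Type) : Prop :=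
  zero_dimensional op /\
  forall U, op U -> type_lt op U K -> C_star_embedded op U.

Definition G_kappa_space {X : Type} (op : (X -> Prop) -> Prop) (K : Type) : Prop :=
  forall (I : Type) (O : I -> X -> Prop), lt_card I K -> (forall i, op (O i)) ->
    (exists y, forall i, O i y) ->
    exists V, op V /\ (exists y, V y) /\ forall y, V y -> forall i, O i y.

Definition compact_set {X : Type} (op : (X -> Prop) -> Prop) (A : X -> Prop) : Prop :=
  forall (I : Type) (F : I -> X -> Prop), (forall i, op (F i)) ->
    (forall y, A y -> exists i, F i y) ->
    exists l : list I, forall y, A y -> exists i, In i l /\ F i y.

Definition hausdorff {X : Type} (op : (X -> Prop) -> Prop) : Prop :=
  forall x y : X, x <> y -> exists U V, op U /\ op V /\ U x /\ V y /\
    forall z, ~ (U z /\ V z).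

Definition no_isolated_points {X : Type} (op : (X -> Prop) -> Prop) : Prop :=
  forall x : X, ~ op (fun y => y = x).

Definition kappa_parovicenko {X : Type} (op : (X -> Prop) -> Prop) (K : Type) : Prop :=
  compact_set op (fun _ => True) /\ hausdorff op /\ zero_dimensional op /\
  F_kappa_space op K /\ G_kappa_space op K /\ no_isolated_points op.

Definition is_base {X : Type} (op : (X -> Prop) -> Prop) (I : Type) (B : I -> X -> Prop) : Prop :=
  (forall i, op (B i)) /\
  forall U x, op U -> U x -> exists i, B i x /\ forall y, B i y -> U y.

Definition weight_eq {X : Type} (op : (X -> Prop) -> Prop) (K : Type) : Prop :=
  (exists B : K -> X -> Prop, is_base op K B) /\
  forall I : Type, lt_card I K -> ~ exists B : I -> X -> Prop, is_base op I B.

Definition sub_open {X : Type} (op : (X -> Prop) -> Prop) (Y A : X -> Prop) : Prop :=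
  exists V, op V /\ forall z, A z <-> (V z /\ Y z).
Definition sub_clopen {X : Type} (op : (X -> Prop) -> Prop) (Y A : X -> Prop) : Prop :=
  (forall z, A z -> Y z) /\ sub_open op Y A /\ sub_open op Y (fun z => Y z /\ ~ A z).

(* Main.v *)
Require Import Defs.
From Stdlib Require Import Reals List Lra ClassicalEpsilon Classical.
From mathcomp Require ssreflect ssrbool eqtype seq boolp wochoice.
Module WO.
Import ssreflect ssrfun ssrbool eqtype seq boolp wochoice.
Lemma wo_exists (T : Type) : exists R : T -> T -> Prop,
  (forall a b, R a b \/ R b a) /\ (forall a b, R a b -> R b a -> a = b) /\
  (forall a b c, R a b -> R b c -> R a c) /\
  (forall P : T -> Prop, (exists a, P a) -> exists m, P m /\ forall b, P b -> R m b).
Proof.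
have [R wR] := well_ordering_principle ({classic T}).
have wc : wo_chain R (mem predT).
  by move=> A _; apply: wR.
have tot := wo_chainW wc.
have anti := wo_chain_antisymmetric wc.
have minP : forall P : T -> Prop, (exists a, P a) -> exists m, P m /\ forall b, P b -> R m b.
  move=> P [a Pa].
  have ne : nonempty (fun x : {classic T} => `[< P x >]).
    by exists a; rewrite unfold_in; apply/asboolP.
  have [z [[zA lb] _]] := wR _ ne.
  exists z; split; first by move: zA; rewrite unfold_in => /asboolP.
  by move=> b Pb; apply: lb; rewrite unfold_in; apply/asboolP.
exists (fun a b => R a b); split; [|split; [|split]].
- by move=> a b; have := tot a b isT isT => /orP.
- by move=> a b h1 h2; apply: anti => //; rewrite h1 h2.
- move=> a b c hab hbc.
  have [m [Pm lb]] := minP (fun x => x = a \/ x = b \/ x = c) (ex_intro _ a (or_introl erefl)).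
  have ha := lb a (or_introl erefl). have hb := lb b (or_intror (or_introl erefl)).
  have hc := lb c (or_intror (or_intror erefl)).
  case: Pm => [Hm|[Hm|Hm]]; subst m.
  + exact: hc.
  + have eb : a = b by apply: anti => //; rewrite hab ha.
    by rewrite eb.
  + have eb : b = c by apply: anti => //; rewrite hbc hb.
    by rewrite -eb.
- exact: minP.
Qed.
End WO.

Section Topo.
Variables (X : Type) (op : (X -> Prop) -> Prop) (Htop : is_topology op).

Lemma op_ext (A B : X -> Prop) : (forall y, A y <-> B y) -> op A -> op B.
Proof. destruct Htop as [E _]. apply E. Qed.

Lemma op_True : op (fun _ => True).
Proof. destruct Htop as [_ [T _]]. exact T. Qed.

Lemma op_and (A B : X -> Prop) : op A -> op B -> op (fun y => A y /\ B y).
Proof. destruct Htop as [_ [_ [I _]]]. apply I. Qed.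

Lemma op_Union (I : Type) (F : I -> X -> Prop) :
  (forall i, op (F i)) -> op (fun y => exists i, F i y).
Proof. destruct Htop as [_ [_ [_ U]]]. apply U. Qed.

Lemma op_False : op (fun _ => False).
Proof.
  apply (op_ext (fun y => exists e : Empty_set, False)).
  - intro y; split; [intros [e _]; destruct e | intros []].
  - apply (op_Union Empty_set (fun _ _ => False)). intros [].
Qed.

Lemma op_or (A B : X -> Prop) : op A -> op B -> op (fun y => A y \/ B y).
Proof.
  intros HA HB.
  apply (op_ext (fun y => exists b : bool, (if b then A else B) y)).
  - intro y; split.
    + intros [[|] H]; auto.
    + intros [H|H]; [exists true | exists false]; exact H.
  - apply (op_Union bool (fun b => if b then A else B)). intros [|]; assumption.
Qed.

Lemma clopen_False : clopen op (fun _ => False).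
Proof.
  split. apply op_False. apply (op_ext (fun _ => True)). intros; tauto. apply op_True.
Qed.

Lemma clopen_or (A B : X -> Prop) : clopen op A -> clopen op B -> clopen op (fun y => A y \/ B y).
Proof.
  intros [HA HA'] [HB HB']. split. apply op_or; auto.
  apply (op_ext (fun y => ~ A y /\ ~ B y)). intros; tauto. apply op_and; auto.
Qed.

Lemma clopen_list (I : Type) (C : I -> X -> Prop) (l : list I) :
  (forall i, clopen op (C i)) -> clopen op (fun y => exists i, In i l /\ C i y).
Proof.
  intro HC. induction l as [|a l IH].
  - destruct clopen_False as [H1 H2]. split.
    + apply (op_ext (fun _ => False)). intro y; split; [tauto|intros [i [[] _]]]. exact H1.
    + apply (op_ext (fun _ => ~False)). intro y; split; [intros _ [i [[] _]]|tauto]. exact H2.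
  - destruct (clopen_or _ _ (HC a) IH) as [H1 H2]. split.
    + apply (op_ext _ _ (fun y => iff_refl _)) in H1. revert H1. apply op_ext.
      intro y; split.
      * intros [H|[i [Hi H]]]; [exists a; simpl; auto | exists i; simpl; auto].
      * intros [i [[<-|Hi] H]]; [left; exact H | right; exists i; auto].
    + revert H2. apply op_ext. intro y; split.
      * intros H [i [[<-|Hi] H']]; apply H; [left; exact H' | right; exists i; auto].
      * intros H [H'|[i [Hi H']]]; apply H; [exists a; simpl; auto | exists i; simpl; auto].
Qed.

Lemma op_neq (x : X) : hausdorff op -> op (fun y => y <> x).
Proof.
  intro H.
  assert (Hc : forall y : {y : X | y <> x}, exists V, op V /\ V (proj1_sig y) /\ forall z, V z -> z <> x).
  { intros [y Hy]. simpl. destruct (H x y (fun e => Hy (eq_sym e))) as [U [V [HUo [HVo [HUx [HVy HUV]]]]]].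
    exists V. split; [exact HVo|split; [exact HVy|]]. intros z Vz ->. apply (HUV x). auto. }
  destruct (choice _ Hc) as [f Hf].
  apply (op_ext (fun z => exists y, f y z)).
  - intro z; split.
    + intros [y Hy]. exact (proj2 (proj2 (Hf y)) z Hy).
    + intro Hz. exists (exist _ z Hz). exact (proj1 (proj2 (Hf _))).
  - apply op_Union. intro y; exact (proj1 (Hf y)).
Qed.

Lemma compact_closed (A : X -> Prop) :
  compact_set op (fun _ => True) -> op (fun y => ~ A y) -> compact_set op A.
Proof.
  intros Hc HA I F HF Hcov.
  destruct (Hc (option I) (fun o => match o with Some i => F i | None => fun y => ~ A y end))
    as [l Hl].
  - intros [i|]; auto.
  - intros y _. destruct (classic (A y)) as [Ay|nAy].
    + destruct (Hcov y Ay) as [i Hi]. exists (Some i). exact Hi.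
    + exists None. exact nAy.
  - exists (flat_map (fun o => match o with Some i => i :: nil | None => nil end) l).
    intros y Ay. destruct (Hl y Logic.I) as [[i|] [Hin Hy]].
    + exists i. split; [|exact Hy]. apply in_flat_map. exists (Some i). simpl; auto.
    + contradiction.
Qed.
End Topo.

Lemma lt_card_sub (I K : Type) (P : I -> Prop) : lt_card I K -> lt_card {i : I | P i} K.
Proof.
  intros [[f Hf] Hn]. split.
  - exists (fun i => f (proj1_sig i)). intros [a Ha] [b Hb] E. simpl in E.
    apply Hf in E. subst b. f_equal. apply proof_irrelevance.
  - intros [g Hg]. apply Hn. exists (fun k => proj1_sig (g k)). intros a b E.
    apply Hg. destruct (g a), (g b). simpl in E. subst. f_equal. apply proof_irrelevance.
Qed.

Section Main.
Variables (K X : Type) (op : (X -> Prop) -> Prop).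
Hypothesis Htop : is_topology op.
Hypothesis Hpar : kappa_parovicenko op K.
Variables (x : X) (U : X -> Prop).
Hypothesis HU : sub_clopen op (fun y => y <> x) U.
Hypothesis Hnc : ~ compact_set op U.

Let Hcomp : compact_set op (fun _ => True). Proof. exact (proj1 Hpar). Qed.
Let Hhaus : hausdorff op. Proof. exact (proj1 (proj2 Hpar)). Qed.
Let Hzd : zero_dimensional op. Proof. exact (proj1 (proj2 (proj2 Hpar))). Qed.
Let HF : forall U, op U -> type_lt op U K -> C_star_embedded op U.
Proof. exact (proj2 (proj1 (proj2 (proj2 (proj2 Hpar))))). Qed.
Let HG : G_kappa_space op K. Proof. exact (proj1 (proj2 (proj2 (proj2 (proj2 Hpar))))). Qed.
Let Hni : no_isolated_points op. Proof. exact (proj2 (proj2 (proj2 (proj2 (proj2 Hpar))))). Qed.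

Lemma U_open : op U.
Proof.
  destruct HU as [_ [[V [HV HVe]] _]].
  apply (op_ext _ _ Htop (fun y => V y /\ y <> x)); [intro y; rewrite HVe; tauto|].
  apply (op_and _ _ Htop); auto. apply (op_neq _ _ Htop); auto.
Qed.

Lemma W_open : op (fun y => y <> x /\ ~ U y).
Proof.
  destruct HU as [_ [_ [V [HV HVe]]]].
  apply (op_ext _ _ Htop (fun y => V y /\ y <> x)); [intro y; rewrite HVe; tauto|].
  apply (op_and _ _ Htop); auto. apply (op_neq _ _ Htop); auto.
Qed.

Lemma no_small_cover (J : Type) (HJ : lt_card J K) (p : J -> X) (V : X -> Prop) (y : X) :
  op V -> V y -> ~ (forall z, V z -> exists j, p j = z).
Proof.
  intros HV Vy Hcov.
  destruct (HG J (fun j z => V z /\ (p j = y \/ z <> p j))) as [W [HWo [[w Hw] HWsub]]].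
  - exact HJ.
  - intro j. destruct (classic (p j = y)) as [E|E].
    + apply (op_ext _ _ Htop V); [intro z; tauto|exact HV].
    + apply (op_ext _ _ Htop (fun z => V z /\ z <> p j)); [intro z; tauto|].
      apply (op_and _ _ Htop); auto. apply (op_neq _ _ Htop); auto.
  - exists y. intro j. split; auto. destruct (classic (p j = y)); auto.
  - assert (Hwy : forall z, W z -> z = y).
    { intros z Wz. destruct (Hcov y Vy) as [j0 _].
      destruct (HWsub z Wz j0) as [Vz _]. destruct (Hcov z Vz) as [j Hj].
      destruct (HWsub z Wz j) as [_ [H|H]]; congruence. }
    apply (Hni y). apply (op_ext _ _ Htop W); [|exact HWo].
    intro z; split; [apply Hwy|intros ->]. rewrite <- (Hwy w Hw). exact Hw.
Qed.

Lemma part2 (I : Type) (HI : lt_card I K) : ~ union_of_clopens op I U.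
Proof.
  intros [C [HC HUC]].
  destruct (WO.wo_exists I) as [R [Rtot [Ranti [Rtrans Rmin]]]].
  assert (Rrefl : forall a, R a a) by (intro a; destruct (Rtot a a); auto).
  set (CF := fun (l : list I) (y : X) => exists i, In i l /\ C i y).
  set (Ule := fun j y => exists k, R k j /\ C k y).
  set (Jp := fun j => forall F : list I, ~ (forall y, U y -> Ule j y \/ CF F y)).
  assert (cover0 : exists F0, forall y, U y -> CF F0 y \/ exists k, Jp k /\ C k y).
  { destruct (classic (forall i, Jp i)) as [Hall|Hn].
    - exists nil. intros y Uy. right. destruct (proj1 (HUC y) Uy) as [i Hi]. exists i; auto.
    - apply not_all_ex_not in Hn. destruct (Rmin (fun i => ~ Jp i) Hn) as [i0 [Hi0 Hmin]].
      unfold Jp in Hi0. apply not_all_ex_not in Hi0. destruct Hi0 as [F HF0]. apply NNPP in HF0.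
      exists (i0 :: F). intros y Uy. destruct (HF0 y Uy) as [[k [Rk Ck]]|[i [Hi Ci]]].
      + destruct (classic (Jp k)) as [Jk|nJk].
        * right; exists k; auto.
        * left. assert (k = i0) by (apply Ranti; auto). subst k. exists i0; split; simpl; auto.
      + left. exists i; split; simpl; auto. }
  destruct cover0 as [F0 HF0].
  set (Z := CF F0).
  assert (HZc : clopen op Z) by (apply (clopen_list _ _ Htop); auto).
  assert (HZU : forall y, Z y -> U y).
  { intros y [i [_ Ci]]. apply HUC; eauto. }
  set (Js := {j : I | Jp j}).
  assert (HJs : lt_card Js K) by (apply lt_card_sub; auto).
  assert (Jinh : exists j0 : Js, True).
  { destruct (classic (exists j, Jp j)) as [[j Hj]|Hn].
    - exists (exist _ j Hj); auto.
    - exfalso. apply Hnc. apply compact_closed; auto.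
      apply (op_ext _ _ Htop (fun y => ~ Z y)); [|exact (proj2 HZc)].
      intro y; split; intros H1 H2; apply H1.
      + destruct (HF0 y H2) as [H|[k [Jk _]]]; [exact H|]. exfalso; apply Hn; eauto.
      + apply HZU; exact H2. }
  set (T := fun (j : Js) y => U y /\ ~ Z y /\ ~ Ule (proj1_sig j) y).
  assert (Tne : forall j, exists y, T j y).
  { intros [j Hj0]. pose proof (Hj0 F0) as Hj. apply not_all_ex_not in Hj. destruct Hj as [y Hy].
    exists y. unfold T; simpl. apply imply_to_and in Hy. destruct Hy as [Uy Hy].
    apply not_or_and in Hy. tauto. }
  assert (HV : forall j : Js, exists V, op V /\ (exists y, V y) /\ forall y, V y -> T j y).
  { intros j.
    destruct (HG {k : I | R k (proj1_sig j)} (fun k y => U y /\ ~ Z y /\ ~ C (proj1_sig k) y))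
      as [V [HVo [HVne HVs]]].
    - apply lt_card_sub; auto.
    - intro k. apply (op_and _ _ Htop); [apply U_open|]. apply (op_and _ _ Htop); [exact (proj2 HZc)| exact (proj2 (HC _))].
    - destruct (Tne j) as [y [Uy [nZ nU]]]. exists y. intro k; split; [auto|split;[auto|]].
      intro Ck. apply nU. exists (proj1_sig k). split; [exact (proj2_sig k)|auto].
    - exists V. split; auto. split; auto. intros y Vy.
      destruct (HVs y Vy (exist _ (proj1_sig j) (Rrefl _))) as [Uy [nZ _]].
      split; auto. split; auto. intros [k [Rk Ck]].
      exact (proj2 (proj2 (HVs y Vy (exist _ k Rk))) Ck). }
  destruct (choice _ HV) as [V HVf].
  assert (Hp : forall j, exists y, V j y) by (intro j; exact (proj1 (proj2 (HVf j)))).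
  destruct (choice _ Hp) as [p Hpf].
  assert (Ha : forall j, exists a, clopen op a /\ (exists y, a y) /\ (forall y, a y -> V j y)
                 /\ forall i y, a y -> y <> p i).
  { intro j.
    assert (Hq : exists q, V j q /\ forall i, q <> p i).
    { apply NNPP; intro Hn.
      apply (no_small_cover Js HJs p (V j) (p j)); [exact (proj1 (HVf j)) | exact (Hpf j) |].
      intros z Vz. apply NNPP; intro Hz. apply Hn. exists z; split; auto.
      intros i E. apply Hz. exists i; auto. }
    destruct Hq as [q [Vq Hq]].
    destruct (HG Js (fun i y => V j y /\ y <> p i)) as [W [HWo [[w Hw] HWs]]]; auto.
    - intro i. apply (op_and _ _ Htop); [exact (proj1 (HVf j))| apply (op_neq _ _ Htop); auto].
    - exists q. intro i; auto.
    - destruct (Hzd W w HWo Hw) as [a [Hac [aw Hsub]]].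
      exists a. split; auto. split; [exists w; auto|]. split.
      + intros y ay. exact (proj1 (HWs y (Hsub y ay) j)).
      + intros i y ay. exact (proj2 (HWs y (Hsub y ay) i)). }
  destruct (choice _ Ha) as [a Haf].
  set (A := fun y => exists j, a j y).
  assert (Hb : forall j, exists b, clopen op b /\ (exists y, b y) /\ (forall y, b y -> V j y)
                 /\ forall i y, b y -> ~ a i y).
  { intro j.
    destruct (HG Js (fun i y => V j y /\ ~ a i y)) as [W [HWo [[w Hw] HWs]]]; auto.
    - intro i. apply (op_and _ _ Htop); [exact (proj1 (HVf j))| exact (proj2 (proj1 (Haf i)))].
    - exists (p j). intro i. split; [exact (Hpf j)|]. intro api.
      exact (proj2 (proj2 (proj2 (Haf i))) j (p j) api eq_refl).
    - destruct (Hzd W w HWo Hw) as [b [Hbc [bw Hsub]]].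
      exists b. split; auto. split; [exists w; auto|]. split.
      + intros y yb. exact (proj1 (HWs y (Hsub y yb) j)).
      + intros i y yb. exact (proj2 (HWs y (Hsub y yb) i)). }
  destruct (choice _ Hb) as [b Hbf].
  assert (Hcl : forall c : Js -> X -> Prop, (forall j, exists y, c j y) ->
            (forall j y, c j y -> T j y) ->
            forall N, op N -> N x -> exists y, N y /\ exists j, c j y).
  { intros c Hcne HcT N HN Nx. apply NNPP; intro Hno.
    destruct (Hcomp (sum bool Js) (fun t => match t with
               | inl true => N
               | inl false => fun y => (y <> x /\ ~ U y) \/ Z y
               | inr k => C (proj1_sig k) end)) as [l Hl].
    - intros [[|]|k]. exact HN. apply (op_or _ _ Htop); [apply W_open|exact (proj1 HZc)]. exact (proj1 (HC _)).
    - intros y _. destruct (classic (y = x)) as [->|nx]. exists (inl true); exact Nx.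
      destruct (classic (U y)) as [Uy|nU].
      + destruct (HF0 y Uy) as [Zy|[k [Jk Ck]]].
        * exists (inl false); right; exact Zy.
        * exists (inr (exist _ k Jk)); exact Ck.
      + exists (inl false); left; auto.
    - assert (Hm : exists m : Js, forall k : Js, In (inr k) l -> R (proj1_sig k) (proj1_sig m)).
      { destruct Jinh as [j0 _]. clear Hl. induction l as [|t l IH].
        - exists j0. intros k [].
        - destruct IH as [m Hm]. destruct t as [bb|k0].
          + exists m. intros k [E|Hk]; [discriminate|auto].
          + destruct (Rtot (proj1_sig k0) (proj1_sig m)) as [H1|H1].
            * exists m. intros k [E|Hk]; [injection E; intros <-; auto|auto].
            * exists k0. intros k [E|Hk]; [injection E; intros <-; auto| eapply Rtrans; eauto]. }
      destruct Hm as [m Hm]. destruct (Hcne m) as [y cy].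
      destruct (HcT m y cy) as [Uy [nZ nU]].
      destruct (Hl y Logic.I) as [t [Ht Fy]]. destruct t as [[|]|k].
      + apply Hno. exists y; eauto.
      + destruct Fy as [[_ H]|H]; contradiction.
      + apply nU. exists (proj1_sig k). split; auto. }
  set (B := fun y => exists j, b j y).
  set (D := fun y => A y \/ B y).
  assert (HAo : op A) by (apply (op_Union _ _ Htop); auto; intro j; exact (proj1 (proj1 (Haf j)))).
  assert (HBo : op B) by (apply (op_Union _ _ Htop); auto; intro j; exact (proj1 (proj1 (Hbf j)))).
  assert (HBA : forall y, B y -> ~ A y).
  { intros y [j yb] [i ay]. exact (proj2 (proj2 (proj2 (Hbf j))) i y yb ay). }
  assert (HDo : op D) by (apply (op_or _ _ Htop); auto).
  assert (HDt : type_lt op D K).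
  { exists Js. split; auto. exists (fun j y => a j y \/ b j y). split.
    - intro j; apply (clopen_or _ _ Htop); auto; [exact (proj1 (Haf j))|exact (proj1 (Hbf j))].
    - intro y; unfold D, A, B; split.
      + intros [[j H]|[j H]]; exists j; auto.
      + intros [j [H|H]]; [left|right]; exists j; auto. }
  set (f := fun y => if excluded_middle_informative (A y) then 1 else 0).
  destruct (HF D HDo HDt f) as [g [Hg Hgf]].
  - exists 1. intros y _. unfold f. destruct (excluded_middle_informative (A y));
      [rewrite Rabs_R1|rewrite Rabs_R0]; lra.
  - intros z Dz eps Heps. destruct (classic (A z)) as [Az|nAz].
    + exists A. split; auto. split; auto. intros y Ay _. unfold f.
      destruct (excluded_middle_informative (A y)); destruct (excluded_middle_informative (A z));
        try contradiction. replace (1 - 1) with 0 by ring. rewrite Rabs_R0; lra.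
    + assert (Bz : B z) by (destruct Dz; [contradiction|auto]).
      exists B. split; auto. split; auto. intros y By _. unfold f.
      destruct (excluded_middle_informative (A y)) as [Ay|];
        [exfalso; exact (HBA y By Ay)|].
      destruct (excluded_middle_informative (A z)); try contradiction.
      replace (0 - 0) with 0 by ring. rewrite Rabs_R0; lra.
  - destruct (Hg x Logic.I (1/2)) as [N [HN [Nx HNg]]]; [lra|].
    destruct (Hcl a (fun j => proj1 (proj2 (Haf j)))
                (fun j y ay => proj2 (proj2 (HVf j)) y (proj1 (proj2 (proj2 (Haf j))) y ay))
                N HN Nx) as [y1 [Ny1 [j1 ay1]]].
    destruct (Hcl b (fun j => proj1 (proj2 (Hbf j)))
                (fun j y yb => proj2 (proj2 (HVf j)) y (proj1 (proj2 (proj2 (Hbf j))) y yb))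
                N HN Nx) as [y2 [Ny2 [j2 by2]]].
    assert (Ay1 : A y1) by (exists j1; auto).
    assert (By2 : B y2) by (exists j2; auto).
    pose proof (HNg y1 Ny1 Logic.I) as E1. pose proof (HNg y2 Ny2 Logic.I) as E2.
    rewrite Hgf in E1 by (left; auto). rewrite Hgf in E2 by (right; auto).
    unfold f in E1, E2.
    destruct (excluded_middle_informative (A y1)); [|contradiction].
    destruct (excluded_middle_informative (A y2)) as [Ay2|]; [exact (HBA y2 By2 Ay2)|].
    apply Rabs_def2 in E1. apply Rabs_def2 in E2. lra.
Qed.

Hypothesis Hw : weight_eq op K.

Lemma part1 : union_of_clopens op K U.
Proof.
  destruct Hw as [[Bs [HBo HBb]] _].
  assert (H : forall k, exists Ck, clopen op Ck /\ (forall y, Ck y -> U y) /\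
     ((exists C', clopen op C' /\ (forall y, Bs k y -> C' y) /\ (forall y, C' y -> U y)) ->
        forall y, Bs k y -> Ck y)).
  { intro k. destruct (classic (exists C', clopen op C' /\ (forall y, Bs k y -> C' y) /\
        (forall y, C' y -> U y))) as [[C' [H1 [H2 H3]]]|Hn].
    - exists C'; split; auto.
    - exists (fun _ => False). split; [apply (clopen_False _ _ Htop); auto|]. split; [tauto|].
      intro E; contradiction. }
  destruct (choice _ H) as [F HFf]. exists F. split; [intro k; apply HFf|].
  intro y; split.
  - intro Uy. destruct (Hzd U y U_open Uy) as [C [HCc [Cy HCU]]].
    destruct (HBb C y (proj1 HCc) Cy) as [k [Bky HkC]]. exists k.
    apply (proj2 (proj2 (HFf k))); [exists C; auto | exact Bky].
  - intros [k Hk]. exact (proj1 (proj2 (HFf k)) y Hk).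
Qed.

End Main.

Theorem lemma4p5 (K : Type) (Kinf : infinite_card K) (HK : kappa_lt_kappa_eq K)
    (X : Type) (op : (X -> Prop) -> Prop) (Htop : is_topology op)
    (Hpar : kappa_parovicenko op K) (Hw : weight_eq op K)
    (x : X) (U : X -> Prop)
    (HU : sub_clopen op (fun y => y <> x) U) (Hnc : not (compact_set op U)) :
  type_eq op U K.
Proof.
  split.
  - exact (part1 K X op Htop Hpar x U HU Hw).
  - intros I HI. exact (part2 K X op Htop Hpar x U HU Hnc I HI).
Qed.
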